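(* Let $X$ be an infinite set and $\{X_0,\dots,X_n\}$ a partition of $X$. Let $(x_k)_{k\in\omega}$ and $(y_k)_{k\in\omega}$ be sequences in the Boolean group $[X]^{<\omega}$ such that the family $\{x_k:k\in\omega\}\cup\{y_k:k\in\omega\}$ (indexed by $k$ and by which sequence it comes from) is linearly independent, and such that for every $p\in\{0,\dots,n\}$ both families $\{x_k\cap X_p:k\in\omega\}$ and $\{y_k\cap X_p:k\in\omega\}$ are linearly independent. Then there exist a strictly increasing sequence $(k_m)_{m\in\omega}$ in $\omega$ and $n_0\in\{0,\dots,n\}$ such that the family $\{x_{k_m}\cap X_{n_0}:m\in\omega\}\cup\{y_{k_m}\cap X_{n_0}:m\in\omega\}$ is linearly independent.
   Context: For a set $X$, $[X]^{<\omega}$ denotes the set of finite subsets of $X$, regarded as a Boolean group (a vector space over the two-element field $2=\{0,1\}$) with symmetric difference $\triangle$ as operation and $\emptyset$ as neutral element. Linear independence is over the field $2$; a linearly independent indexed family has pairwise distinct members. *)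

(* Defs.v *)
From mathcomp Require Import all_boot.
From mathcomp Require Import boolp classical_sets cardinality.
Set Implicit Arguments. Unset Strict Implicit. Unset Printing Implicit Defensive.
Local Open Scope classical_set_scope.

(* Symmetric difference: the group operation of the Boolean group [X]^{<omega}. *)
Definition symdiff {X : Type} (A B : set X) : set X := (A `\` B) `|` (B `\` A).

(* A family (f i)_{i : I} of elements of the Boolean group (vector space over 2)
   is linearly independent iff no nonempty finite set of distinct indices has
   members summing (symmetric difference) to the neutral element set0. *)
Definition lin_indep {X : Type} {I : eqType} (f : I -> set X) : Prop :=
  forall s : seq I, uniq s -> s <> [::] ->
    \big[symdiff/set0]_(i <- s) f i <> set0.

Definition join_fam {X : Type} (x y : nat -> set X) : nat + nat -> set X :=
  fun i => match i with inl k => x k | inr k => y k end.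

Definition is_partition {X : Type} (n : nat) (P : 'I_n.+1 -> set X) : Prop :=
  (forall p, P p !=set0) /\
  (forall p q, p != q -> P p `&` P q = set0) /\
  (forall z : X, exists p, P p z).

(* Main.v *)
Require Import Defs.
From mathcomp Require Import all_boot.
From mathcomp Require Import boolp classical_sets cardinality.
Set Implicit Arguments. Unset Strict Implicit. Unset Printing Implicit Defensive.
Local Open Scope classical_set_scope.

Lemma symdiffE {X : Type} (A B : set X) z :
  symdiff A B z <-> (`[< A z >] (+) `[< B z >]).
Proof.
rewrite /symdiff /setD /setU /=.
case: (asboolP (A z)) => ha; case: (asboolP (B z)) => hb /=; split => //; tauto.
Qed.

Lemma bigsumE {X : Type} {I : Type} (f : I -> set X) s z :
  (\big[symdiff/set0]_(i <- s) f i) z <-> odd (count (fun i => `[< f i z >]) s).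
Proof.
elim: s => [|i s IH]; first by rewrite big_nil.
rewrite big_cons symdiffE /= oddD oddb.
set B := \big[_/_]_(_ <- _) _ in IH *.
case: (asboolP (f i z)) => _; case: (asboolP (B z)) => hb; move: IH hb;
  case: (odd _) => /= -[h1 h2] hb; split => //; try tauto.
Qed.

Lemma count2 (I : eqType) (p : pred I) (e1 e2 : I) s : e1 != e2 -> uniq s ->
  {in s, forall i, p i -> (i == e1) || (i == e2)} ->
  count p s = ((e1 \in s) && p e1) + ((e2 \in s) && p e2).
Proof.
move=> ne; elim: s => [|i s IH] //= /andP[nis us] H.
rewrite IH //; last by move=> j js; apply: H; rewrite inE js orbT.
rewrite !inE; case: (boolP (p i)) => pi.
- case/orP: (H i (mem_head _ _) pi) => /eqP ei; subst i;
    rewrite ?eqxx pi ?(negbTE nis) /= ?(negbTE ne) ?(eq_sym e2 e1) ?(negbTE ne) /=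
      ?addn0 ?add0n //. all: try by rewrite addnC.
- have F1 : forall e, ((e == i) || (e \in s)) && p e = (e \in s) && p e.
    by move=> e; case: (eqVneq e i) => [->|] /=; rewrite ?(negbTE pi) ?andbF.
  by rewrite !F1.
Qed.

Definition idx (i : nat + nat) : nat := match i with inl k => k | inr k => k end.
Definition Good {X : Type} (w : nat + nat -> set X) m :=
  forall s : seq (nat + nat), uniq s -> s <> [::] -> all (fun i => idx i < m) s ->
  \big[symdiff/set0]_(i <- s) w i <> set0.

Lemma not_sub_ex {X : Type} (A F : set X) : ~ A `<=` F -> exists z, A z /\ ~ F z.
Proof.
move=> nAF; apply: contra_notP nAF => nex z Az.
case: (pselect (F z)) => // nz; exfalso; apply: nex; by exists z.
Qed.

Lemma good_step {X : Type} (w : nat + nat -> set X) F m : Good w m ->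
  (forall i, idx i < m -> w i `<=` F) -> ~ w (inl m) `<=` F -> ~ w (inr m) `<=` F ->
  ~ symdiff (w (inl m)) (w (inr m)) `<=` F -> Good w m.+1.
Proof.
move=> G sub na nb nab s us sn alls H0.
have Hz : forall z, ~~ odd (count (fun i => `[< w i z >]) s).
  move=> z; apply/negP => /(proj2 (bigsumE _ _ _)); by rewrite H0.
have Hc : forall z, ~ F z -> count (fun i => `[< w i z >]) s =
    ((inl m \in s) && `[< w (inl m) z >]) + ((inr m \in s) && `[< w (inr m) z>]).
  move=> z nz; apply: count2 => // i iS /asboolP wiz.
  have := allP alls i iS; rewrite ltnS leq_eqVlt => /orP[/eqP ei| lt].
    by case: i iS wiz ei => k /= _ _ ->; rewrite eqxx ?orbT.
  by exfalso; apply: nz; apply: (sub i lt).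
case: (boolP (inl m \in s)) => lin; case: (boolP (inr m \in s)) => rin.
- have [z [hz nz]] := not_sub_ex nab.
  have := Hz z; rewrite Hc // lin rin /= oddD !oddb.
  by move/symdiffE: hz => ->.
- have [z [hz nz]] := not_sub_ex na.
  have := Hz z; rewrite Hc // lin (negbTE rin) /= addn0 oddb.
  by case: (asboolP (w (inl m) z)).
- have [z [hz nz]] := not_sub_ex nb.
  have := Hz z; rewrite Hc // rin (negbTE lin) /= oddb.
  by case: (asboolP (w (inr m) z)).
- apply: (G s us sn _ H0); apply/allP => i iS.
  have := allP alls i iS; rewrite ltnS leq_eqVlt => /orP[/eqP ei|//].
  case: i iS ei => k iS /= ek; subst k.
    by rewrite iS in lin.
  by rewrite iS in rin.
Qed.

Lemma good_indep {X : Type} (w : nat + nat -> set X) :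
  (forall m, Good w m) -> lin_indep w.
Proof.
move=> G s us sn; apply: (G (sumn (map (fun i => (idx i).+1) s))) => //.
apply/allP => i; elim: (s) => //= j t IH; rewrite inE => /orP[/eqP->|/IH].
  exact: leq_addr.
move=> h; exact: (leq_trans h (leq_addl _ _)).
Qed.
Lemma mem_sumn (k : nat) t : k \in t -> k <= sumn t.
Proof.
elim: t => //= j t IH; rewrite inE => /orP[/eqP->|/IH h]; first exact: leq_addr.
exact: (leq_trans h (leq_addl _ _)).
Qed.

Lemma PH {X : Type} (F : set X) (f : nat -> set X) : finite_set F ->
  (forall j k, f j = f k -> j = k) -> exists M, forall k, M <= k -> ~ f k `<=` F.
Proof.
elim/Peq: X => X in F f *.
move=> /finite_seqP [s ->] finj.
pose h (k : nat) : option {ffun 'I_(size s) -> bool} :=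
  if `[< f k `<=` [set` s] >] then Some [ffun i => `[< f k (tnth (in_tuple s) i) >]]
  else None.
have fin : finite_set (h @^-1` [set o | o != None]).
  apply: finite_preimage; last exact: finite_finset.
  move=> j k; rewrite !in_setE /h /preimage /=.
  case: (asboolP (f j `<=` _)) => sj; case: (asboolP (f k `<=` _)) => sk //= _ _ [/ffunP E].
  apply: finj; apply/funext => z; apply/propext; split => fz.
  - have : z \in in_tuple s by exact: (sj _ fz).
    case/tnthP => i zi; have := E i; rewrite !ffunE -zi.
    by case: (asboolP (f j z)) => // _ /esym /asboolP.
  - have : z \in in_tuple s by exact: (sk _ fz).
    case/tnthP => i zi; have := E i; rewrite !ffunE -zi.
    by case: (asboolP (f k z)) => // _ /asboolP.
have [t ht] := (finite_seqP _).1 fin.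
exists (sumn t).+1 => k Mk fk.
have : (h @^-1` [set o | o != None]) k by rewrite /h /preimage /=; case: asboolP.
rewrite ht /= => /mem_sumn; by rewrite leqNgt Mk.
Qed.

Section Greedy.
Variables (X : Type) (u v : nat -> set X) (g : set X -> nat -> nat).
Hypothesis fu : forall k, finite_set (u k).
Hypothesis fv : forall k, finite_set (v k).
Hypothesis hg : forall F N, finite_set F -> N <= g F N /\ ~ u (g F N) `<=` F /\
  ~ v (g F N) `<=` F /\ ~ symdiff (u (g F N)) (v (g F N)) `<=` F.

Fixpoint st m : nat * set X := match m with
 | 0 => let k := g set0 0 in (k, set0 `|` (u k `|` v k))
 | m'.+1 => let k := g (st m').2 (st m').1.+1 in (k, (st m').2 `|` (u k `|` v k))
 end.
Definition km m := (st m).1.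
Definition G m := if m is m'.+1 then (st m').2 else set0.

Lemma stG m : (st m).2 = G m `|` (u (km m) `|` v (km m)).
Proof. by case: m. Qed.

Lemma G_fin m : finite_set (G m).
Proof.
elim: m => [|m IH]; first exact: finite_set0.
change (G m.+1) with (st m).2; rewrite stG.
by rewrite !finite_setU; split => //; split.
Qed.

Lemma km_spec m : km m = g (G m) (if m is m'.+1 then (km m').+1 else 0).
Proof. by case: m. Qed.

Lemma km_prop m : ~ u (km m) `<=` G m /\ ~ v (km m) `<=` G m /\
  ~ symdiff (u (km m)) (v (km m)) `<=` G m.
Proof. rewrite km_spec; exact: (hg _ (G_fin m)).2. Qed.

Lemma km_lt m : km m < km m.+1.
Proof. rewrite [km m.+1]km_spec; exact: (hg _ (G_fin _)).1. Qed.

Lemma km_mono m m' : m < m' -> km m < km m'.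
Proof.
elim: m' => // m' IH; rewrite ltnS leq_eqVlt => /orP[/eqP->|/IH h].
  exact: km_lt.
exact: ltn_trans h (km_lt _).
Qed.

Lemma sub_G i m : i < m -> u (km i) `<=` G m /\ v (km i) `<=` G m.
Proof.
elim: m => // m IH; change (G m.+1) with (st m).2; rewrite stG.
rewrite ltnS leq_eqVlt => /orP[/eqP->|/IH [h1 h2]].
  by split => z hz; right; [left|right].
by split => z hz; left; [apply: h1|apply: h2].
Qed.

Lemma good_all m : Good (join_fam (fun m => u (km m)) (fun m => v (km m))) m.
Proof.
elim: m => [|m IH].
  by case => // i s _ _ /andP[].
have [h1 [h2 h3]] := km_prop m.
apply: (good_step (F := G m) IH) => //.
by case=> k /= lt; have [] := sub_G lt.
Qed.

End Greedy.
Lemma indep_inj {X : Type} (u : nat -> set X) : lin_indep u ->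
  forall j k, u j = u k -> j = k.
Proof.
move=> hu j k e; case: (eqVneq j k) => // ne; exfalso.
apply: (hu [:: j; k]) => //=; first by rewrite inE ne.
apply/funext => z; apply/propext; split => // /bigsumE /=.
by rewrite e addn0; case: asboolP.
Qed.

Lemma sdist {X : Type} (x y : nat -> set X) : lin_indep (join_fam x y) ->
  forall j k, symdiff (x j) (y j) = symdiff (x k) (y k) -> j = k.
Proof.
move=> hi j k e; case: (eqVneq j k) => // ne; exfalso.
apply: (hi [:: inl j; inr j; inl k; inr k]) => //=.
  rewrite !inE /=; apply/and3P; split => //; first apply/norP; try split => //; apply/eqP => -[/eqP]; by rewrite (negbTE ne).
apply/funext => z; apply/propext; split => // /bigsumE /=.
have E : `[< x j z >] (+) `[< y j z >] = `[< x k z >] (+) `[< y k z >].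
  by apply/idP/idP => /symdiffE h; apply/symdiffE; [rewrite -e | rewrite e].
by rewrite addn0 !oddD !oddb addbA E addbb.
Qed.

Lemma key {X : Type} (u v : nat -> set X) : (forall k, finite_set (u k)) ->
  (forall k, finite_set (v k)) -> lin_indep u -> lin_indep v ->
  (exists km : nat -> nat, (forall m m', m < m' -> km m < km m') /\
     lin_indep (join_fam (fun m => u (km m)) (fun m => v (km m)))) \/
  (exists F N, finite_set F /\ forall k, N <= k -> symdiff (u k) (v k) `<=` F).
Proof.
move=> fu fv iu iv.
case: (pselect (exists F N, finite_set F /\
  forall k, N <= k -> symdiff (u k) (v k) `<=` F)) => [h|nB]; [by right|left].
have hex : forall FN : set X * nat, exists k, finite_set FN.1 -> FN.2 <= k /\
   ~ u k `<=` FN.1 /\ ~ v k `<=` FN.1 /\ ~ symdiff (u k) (v k) `<=` FN.1.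
  case=> F N /=; case: (pselect (finite_set F)) => fF; last by exists 0.
  have [Mu hu] := PH fF (indep_inj iu).
  have [Mv hv] := PH fF (indep_inj iv).
  have : exists k, maxn N (maxn Mu Mv) <= k /\ ~ symdiff (u k) (v k) `<=` F.
    apply: contra_notP nB => nex; exists F, (maxn N (maxn Mu Mv)); split => // k lek.
    case: (pselect (symdiff (u k) (v k) `<=` F)) => // ns; exfalso.
    by apply: nex; exists k.
  case=> k [lek ns]; exists k => _; rewrite !geq_max in lek.
  case/andP: lek => lN /andP[lu lv].
  by split => //; split; [exact: hu | split; [exact: hv | exact: ns]].
have [g' hg'] := choice hex.
pose g F N := g' (F, N).
have hg : forall F N, finite_set F -> N <= g F N /\ ~ u (g F N) `<=` F /\
  ~ v (g F N) `<=` F /\ ~ symdiff (u (g F N)) (v (g F N)) `<=` F.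
  by move=> F N fF; exact: (hg' (F, N) fF).
exists (km u v g); split; first by move=> m m'; exact: (km_mono fu fv hg).
apply: good_indep => m; exact: (good_all fu fv hg).
Qed.

Theorem mainTheorem2 (X : Type) (n : nat) (P : 'I_n.+1 -> set X)
  (x y : nat -> set X) :
  infinite_set (@setT X) ->
  is_partition P ->
  (forall k, finite_set (x k)) -> (forall k, finite_set (y k)) ->
  lin_indep (join_fam x y) ->
  (forall p, lin_indep (fun k => x k `&` P p) /\ lin_indep (fun k => y k `&` P p)) ->
  exists (km : nat -> nat) (n0 : 'I_n.+1),
    (forall m m', (m < m')%N -> (km m < km m')%N) /\
    lin_indep (join_fam (fun m => x (km m) `&` P n0) (fun m => y (km m) `&` P n0)).
Proof.
move=> _ [_ [_ cover]] fx fy ij ip.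
have K p := key (fun k => finite_setIl (P p) (fx k)) (fun k => finite_setIl (P p) (fy k))
  (ip p).1 (ip p).2.
case: (pselect (exists p, exists km : nat -> nat,
   (forall m m', m < m' -> km m < km m') /\
   lin_indep (join_fam (fun m => x (km m) `&` P p) (fun m => y (km m) `&` P p)))).
  by case=> p [km [h1 h2]]; exists km, p.
move=> nL.
have hB : forall p, exists FN : set X * nat, finite_set FN.1 /\ forall k, FN.2 <= k ->
    symdiff (x k `&` P p) (y k `&` P p) `<=` FN.1.
  move=> p; case: (K p) => [h|[F [N h]]]; last by exists (F, N).
  by exfalso; apply: nL; exists p.
have [FN hFN] := choice hB.
pose Gs := \bigcup_(p in [set: 'I_n.+1]) (FN p).1.
have fG : finite_set Gs.
  by apply: bigcup_finite; [exact: finite_finset | move=> p _; exact: (hFN p).1].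
have [M hM] := PH fG (sdist ij).
pose N := \max_(p < n.+1) (FN p).2.
exfalso; apply: (hM (maxn N M)); first exact: leq_maxr.
move=> z hz; have [p Pz] := cover z.
exists p => //; apply: ((hFN p).2 (maxn N M)).
  apply: leq_trans (leq_maxl _ M); rewrite /N; exact: (leq_bigmax (F := fun p0 : 'I_n.+1 => (FN p0).2) p).
move: hz; rewrite /symdiff /setD /setU /setI /=.
by case=> -[h1 h2]; [left|right]; (split; [by split| by case]). 
Qed.
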